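(* Let $M$ be an $R$-module and $S=R\setminus W_R(M)$. (a) If $S^{-1}R=R$, then $M$ satisfies the dual of proper strong Property $\mathcal{A}$ if and only if $M$ satisfies the dual of Property $\mathcal{A}$. (b) If $S^{-1}R\neq R$, then $M$ satisfies the dual of proper strong Property $\mathcal{A}$ if and only if $M$ satisfies the dual of strong Property $\mathcal{A}$.
   Context: All rings are commutative with identity. For an $R$-module $M$, $W_R(M)=\{r\in R : rM\neq M\}$. $M$ satisfies the dual of Property $\mathcal{A}$ if for every finitely generated ideal $I$ of $R$ with $I\subseteq W_R(M)$ we have $IM\neq M$. $M$ satisfies the dual of proper strong Property $\mathcal{A}$ if for every proper finitely generated ideal $I=\langle a_1,\dots,a_n\rangle$ of $R$ with $a_i\in W_R(M)$ for all $i$, we have $IM\neq M$. A proper submodule $L$ of $M$ is completely irreducible if whenever $L=\bigcap_{i\in I}L_i$ for a family $\{L_i\}$ of submodules, then $L=L_i$ for some $i$. $M$ satisfies the dual of strong Property $\mathcal{A}$ if for any $a_1,\dots,a_n\in W_R(M)$ there is a completely irreducible submodule $L$ of $M$ with $a_iM\subseteq L\neq M$ for all $i$. For a multiplicatively closed set $S$, ''$S^{-1}R=R$'' means that the canonical map $R\to S^{-1}R$ is an isomorphism (equivalently every element of $S$ is a unit of $R$). *)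

(* Defs.v *)
From HB Require Import structures.
From mathcomp Require Import all_boot all_order all_algebra.
Set Implicit Arguments. Unset Strict Implicit. Unset Printing Implicit Defensive.
Import GRing.Theory.
Local Open Scope ring_scope.

Section ModuleDefs.
Variables (R : comPzRingType) (M : lmodType R).

Definition W (r : R) : Prop := ~ (forall m : M, exists m' : M, r *: m' = m).

Definition in_ideal (n : nat) (a : 'I_n -> R) (x : R) : Prop :=
  exists c : 'I_n -> R, x = \sum_(i < n) c i * a i.

Definition IM_eq_M (n : nat) (a : 'I_n -> R) : Prop :=
  forall m : M, exists v : 'I_n -> M, m = \sum_(i < n) a i *: v i.

Definition dual_property_A : Prop :=
  forall (n : nat) (a : 'I_n -> R),
    (forall x, in_ideal a x -> W x) -> ~ IM_eq_M a.

Definition dual_proper_strong_property_A : Prop :=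
  forall (n : nat) (a : 'I_n -> R),
    ~ in_ideal a 1 -> (forall i, W (a i)) -> ~ IM_eq_M a.

Definition is_submodule (L : M -> Prop) : Prop :=
  L 0 /\ (forall x y, L x -> L y -> L (x + y)) /\ (forall (r : R) x, L x -> L (r *: x)).

Definition completely_irreducible (L : M -> Prop) : Prop :=
  is_submodule L /\ (exists m, ~ L m) /\
  forall (I : Type) (F : I -> M -> Prop),
    (forall i, is_submodule (F i)) ->
    (forall m, L m <-> forall i, F i m) ->
    exists i, forall m, L m <-> F i m.

Definition dual_strong_property_A : Prop :=
  forall (n : nat) (a : 'I_n -> R), (forall i, W (a i)) ->
    exists L : M -> Prop, completely_irreducible L /\
      (forall i (m : M), L (a i *: m)).

(* S^{-1} R = R where S = R \ W_R(M): every element of S is a unit *)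
Definition loc_trivial : Prop :=
  forall r : R, ~ W r -> exists s : R, r * s = 1.

End ModuleDefs.

(* Main.v *)
Require Import Defs.
From mathcomp Require Import all_boot all_order all_algebra.
From mathcomp Require Import classical_sets.
From Stdlib Require Import Classical ClassicalEpsilon.
Set Implicit Arguments. Unset Strict Implicit. Unset Printing Implicit Defensive.
Import GRing.Theory.

Section Helpers.
Local Open Scope ring_scope.
Variables (R : comPzRingType) (M : lmodType R).

Lemma notW1 : ~ W M 1.
Proof. by apply=> m; exists m; rewrite scale1r. Qed.

Lemma in_ideal_gen n (a : 'I_n -> R) i : in_ideal a (a i).
Proof.
exists (fun j => if j == i then 1 else 0).
rewrite (bigD1 i) //= eqxx mul1r big1 ?addr0 // => j /negbTE ->.
by rewrite mul0r.
Qed.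

Lemma sum_delta n (a : 'I_n -> R) i (m : M) :
  a i *: m = \sum_(j < n) a j *: (if j == i then m else 0).
Proof.
rewrite (bigD1 i) //= eqxx big1 ?addr0 // => j /negbTE ->.
by rewrite scaler0.
Qed.

Lemma ideal_sub_L (L : M -> Prop) n (a : 'I_n -> R) (v : 'I_n -> M) :
  is_submodule L -> (forall i m, L (a i *: m)) -> L (\sum_(i < n) a i *: v i).
Proof.
move=> [L0 [LD LZ]] Ha.
by apply: (big_ind L) => //.
Qed.

End Helpers.

Local Open Scope ring_scope.
Theorem theorem3p8 (R : comPzRingType) (M : lmodType R) :
  (loc_trivial M ->
     (dual_proper_strong_property_A M <-> dual_property_A M)) /\
  (~ loc_trivial M ->
     (dual_proper_strong_property_A M <-> dual_strong_property_A M)).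
Proof.
split.
- move=> LT; split.
  + move=> PS n a H; apply: PS.
    * by move=> /H; apply: notW1.
    * by move=> i; apply: H; apply: in_ideal_gen.
  + move=> PA n a n1 Wa; apply: PA => x [c Hx].
    apply: NNPP => nW; have [s Hs] := LT x nW; apply: n1.
    exists (fun i => c i * s); rewrite -Hs Hx GRing.mulr_suml.
    by apply: eq_bigr => i _; rewrite GRing.mulrAC.
- move=> nLT.
  have [r [nWr nur]] : exists r : R, ~ W M r /\ ~ exists s, (r * s = 1)%R.
    apply: NNPP => H; apply: nLT => r nWr; apply: NNPP => ne; apply: H.
    by exists r.
  have rsurj : forall m : M, exists m', r *: m' = m.
    by move=> m; apply: NNPP => ne; apply: nWr => H; apply: ne; apply: H.
  split.
  + move=> PS n a Wa.
    pose b i := (a i * r)%R.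
    have nb1 : ~ in_ideal b 1.
      move=> [c Hc]; apply: nur; exists (\sum_(i < n) c i * a i)%R.
      rewrite Hc GRing.mulr_sumr; apply: eq_bigr => i _.
      by rewrite /b GRing.mulrCA [(r * _)%R]GRing.mulrC.
    have Wb : forall i, W M (b i).
      move=> i H; apply: (Wa i) => m; have [m' Hm'] := H m.
      by exists (r *: m'); rewrite GRing.scalerA.
    have nIM := PS n b nb1 Wb.
    have [m0 Hm0] : exists m0 : M, ~ exists v : 'I_n -> M,
        m0 = \sum_(i < n) b i *: v i.
      by apply: NNPP => H; apply: nIM => m; apply: NNPP => ne; apply: H; exists m.
    pose N (x : M) := exists v : 'I_n -> M, x = \sum_(i < n) a i *: v i.
    have nN0 : ~ N m0.
      move=> [v Hv]; apply: Hm0.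
      exists (fun i => proj1_sig (constructive_indefinite_description _ (rsurj (v i)))).
      rewrite Hv; apply: eq_bigr => i _.
      case: (constructive_indefinite_description _ _) => w /= <-.
      by rewrite /b GRing.scalerA.
    have Nsub : is_submodule N.
      split; [|split].
      * exists (fun _ => 0); by rewrite big1 // => i _; rewrite GRing.scaler0.
      * move=> x y [v ->] [w ->]; exists (fun i => v i + w i).
        by rewrite -big_split /=; apply: eq_bigr => i _; rewrite GRing.scalerDr.
      * move=> s x [v ->]; exists (fun i => s *: v i).
        rewrite GRing.scaler_sumr; apply: eq_bigr => i _.
        by rewrite !GRing.scalerA GRing.mulrC.
    pose P (A : set M) := is_submodule (fun x => A x \/ N x) /\ ~ (A m0 \/ N m0).
    have [A0 [PA0 A0max]] : exists A, P A /\ forall B, proper A B -> ~ P B.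
      apply: Zorn_bigcup => F FP Ftot.
      pose U := bigcup F id.
      have key : forall x y, (U x \/ N x) -> (U y \/ N y) ->
          (N x /\ N y) \/ exists C, F C /\ (C x \/ N x) /\ (C y \/ N y).
        move=> x y [[X FX Xx]|Nx] [[Y FY Yy]|Ny].
        * right; have [XY|YX] := Ftot _ _ FX FY.
            by exists Y; split=> //; split; left=> //; apply: XY.
          by exists X; split=> //; split; left=> //; apply: YX.
        * by right; exists X; split=> //; split; [left|right].
        * by right; exists Y; split=> //; split; [right|left].
        * by left.
      split; [split; [|split]|].
      * by right; case: Nsub.
      * move=> x y Hx Hy; have [[Nx Ny]|[C [FC [Cx Cy]]]] := key x y Hx Hy.
          by right; case: Nsub => _ [+ _]; apply.
        have [_ [CD _]] := (FP C FC).1.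
        by case: (CD x y Cx Cy) => [Cxy|Nxy]; [left; exists C|right].
      * move=> s x [[X FX Xx]|Nx].
          have [_ [_ XZ]] := (FP X FX).1.
          by case: (XZ s x (or_introl Xx)) => [Xs|Ns]; [left; exists X|right].
        by right; case: Nsub => _ [_]; apply.
      * move=> [[X FX Xx]|Nm0]; first by apply: (FP X FX).2; left.
        by apply: nN0.
    pose L (x : M) := A0 x \/ N x.
    exists L; split.
    * split; first exact: PA0.1.
      split; first by exists m0; apply: PA0.2.
      move=> I F Fsub HL.
      have [i nFi] : exists i, ~ F i m0.
        apply: NNPP => H; apply: PA0.2; apply/HL => i.
        by apply: NNPP => ne; apply: H; exists i.
      exists i => m; split; first by move/HL; apply.
      move=> Fm; apply: NNPP => nLm.
      have LF : forall x, L x -> F i x by move=> x /HL; apply.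
      apply: (A0max (F i)).
        split; first by move=> x A0x; apply: LF; left.
        by move=> /(_ m Fm) A0m; apply: nLm; left.
      split.
        have FE : forall x, (F i x \/ N x) <-> F i x.
          by move=> x; split=> [[//|Nx]|]; [apply: LF; right|left].
        have [F0 [FD FZ]] := Fsub i.
        split; [left=> //|split].
        - by move=> x y /FE Fx /FE Fy; left; apply: FD.
        - by move=> s x /FE Fx; left; apply: FZ.
      by move=> [//|Nm0]; apply: nN0.
    * move=> i m; right; exists (fun j => if j == i then m else 0).
      exact: sum_delta.
  + move=> SA n a _ Wa; have [L [[Lsub [[m Lm] _]] HL]] := SA n a Wa; move=> HIM.
    apply: Lm; have [v ->] := HIM m.
    exact: ideal_sub_L.
Qed.
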